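(* Let $p,q$ be positive integers with $1<q<p-q$, $\gcd(p,q)=1$, and $A=\langle q,p-q\rangle$. Let $((\mathbb{Z},G_{0,j}^+),f_{0,j})_{j\ge0}$ be a directed system of simple components with $G_{0,0}^+=A$, where each $f_{0,j}\colon(\mathbb{Z},G_{0,j}^+)\to(\mathbb{Z},G_{0,j+1}^+)$ is an order-embedding given by multiplication by a positive integer $n_j$, and let $(H,H^+)$ be its direct limit. Let $\mathfrak{n}=\prod_{j\ge0}n_j$, and suppose $r>q$ is a positive integer coprime with $\mathfrak{n}$ and $s\in A$ satisfies $\gcd(r,s)=1$ and $r<s-r$; put $B=\langle r,s-r\rangle$. Define $G_{i,0}^+=rG_{i-1,0}^++s^iB$ for $i>0$ and $G_{i,j}^+=rG_{i-1,j}^++n_{j-1}G_{i,j-1}^+$ for $i,j>0$. Let $f_{i,j}\colon(\mathbb{Z},G_{i,j}^+)\to(\mathbb{Z},G_{i,j+1}^+)$ be multiplication by $n_j$ and $g_{i,j}\colon(\mathbb{Z},G_{i,j}^+)\to(\mathbb{Z},G_{i+1,j}^+)$ multiplication by $r$; let $G_i^+=G_{i,i}^+$ and $f_i\colon(\mathbb{Z},G_i^+)\to(\mathbb{Z},G_{i+1}^+)$ be multiplication by $rn_i$. Let $(K,K^+)=\varinjlim((\mathbb{Z},G_{i,0}^+),g_{i,0})$. Then: (i) $(\mathbb{Z},G_{i,j}^+)$ is a simple component for all $i,j$; (ii) all $f_{i,j}$ and $g_{i,j}$ are order-embeddings; (iii) the direct limit $(G,G^+)$ of $((\mathbb{Z},G_i^+),f_i)$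 is a simple partially ordered group of rank one, and there are order-embeddings $(H,H^+)\to(G,G^+)$ and $(K,K^+)\to(G,G^+)$; (iv) there is an interval $D_r\subseteq G^+$ with $tD_r\neq G^+$ for every positive integer $t\le r-1$ and $rD_r=G^+$.
   Context: $\langle a_1,\dots,a_k\rangle$: submonoid of $\mathbb{Z}^+$ generated by the $a_i$; for subsets $X,Y\subseteq\mathbb{Z}$ and integers $m$, $mX+Y=\{mx+y\}$. A simple component is a simple partially ordered abelian group $(\mathbb{Z},P)$ (simple: every nonzero positive element $u$ is an order-unit, i.e. for all $x$ there is $n$ with $-nu\le x\le nu$). Order-embedding: injective homomorphism with $f(G^+)=f(G)\cap H^+$. Rank one: isomorphic to a nonzero subgroup of $\mathbb{Q}$. Direct limits carry as positive cone the union of images of positive cones. The generalized integer $\prod_j n_j$ assigns to each prime $\ell$ the (possibly infinite) sum of the exponents of $\ell$ in the $n_j$; $r$ coprime with it means no prime divisor of $r$ divides any $n_j$. An interval in $G^+$ is a nonempty, upward directed, order-hereditary subset of $G^+$; $X+Y=\{z\in G^+: z\le x+y,\ x\in X,\ y\in Y\}$ and $tX$ is the $t$-fold sum. *)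

(* Defs.v *)
From mathcomp Require Import all_boot all_order all_algebra.
Set Implicit Arguments. Unset Strict Implicit. Unset Printing Implicit Defensive.
Import Order.TTheory GRing.Theory Num.Theory.
Local Open Scope ring_scope.

Definition gen2 (a b : int) : int -> Prop :=
  fun z => exists x y : nat, z = a *+ x + b *+ y.

Definition msum (m : int) (X : int -> Prop) (k : int) (Y : int -> Prop)
  : int -> Prop :=
  fun z => exists x y, X x /\ Y y /\ z = m * x + k * y.

Definition pocone (G : zmodType) (Gp : G -> Prop) : Prop :=
  [/\ Gp 0,
      (forall x y, Gp x -> Gp y -> Gp (x + y))
    & (forall x, Gp x -> Gp (- x) -> x = 0)].

Definition order_unit (G : zmodType) (Gp : G -> Prop) (u : G) : Prop :=
  forall x, exists n : nat, Gp (x + u *+ n) /\ Gp (u *+ n - x).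

Definition simple_pog (G : zmodType) (Gp : G -> Prop) : Prop :=
  pocone Gp /\ (forall u, Gp u -> u != 0 -> order_unit Gp u).

Definition simple_component (P : int -> Prop) : Prop := simple_pog P.

Definition order_embedding (G H : zmodType) (Gp : G -> Prop) (Hp : H -> Prop)
  (psi : G -> H) : Prop :=
  [/\ (forall x y, psi (x + y) = psi x + psi y),
      injective psi
    & (forall x, Gp x <-> Hp (psi x))].

(** [(G, Gp)] with canonical maps [phi i : Z -> G] is a direct limit of the
    directed system [((Z, P i), multiplication by m i)]: the group [G] is the
    direct limit of abelian groups (compatible cocone of homomorphisms, jointly
    surjective, with kernel of [phi i] consisting of the elements eventually
    sent to 0), and the positive cone is the union of the images of the
    positive cones. *)
Definition is_dlimit (P : nat -> int -> Prop) (m : nat -> int)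
  (G : zmodType) (Gp : G -> Prop) (phi : nat -> int -> G) : Prop :=
  [/\ (forall i x y, phi i (x + y) = phi i x + phi i y),
      (forall i x, phi i.+1 (m i * x) = phi i x),
      (forall g, exists i x, g = phi i x),
      (forall i x, phi i x = 0 ->
          exists k, (\prod_(i <= l < i + k) m l) * x = 0)
    & (forall g, Gp g <-> exists i x, P i x /\ g = phi i x)].

Definition rank_one (G : zmodType) : Prop :=
  (exists g : G, g != 0) /\
  exists psi : G -> rat,
    (forall x y, psi (x + y) = psi x + psi y) /\ injective psi.

Definition pole (G : zmodType) (Gp : G -> Prop) (x y : G) := Gp (y - x).

Definition g_interval (G : zmodType) (Gp : G -> Prop) (D : G -> Prop) : Prop :=
  [/\ (forall x, D x -> Gp x),
      (exists x, D x),
      (forall x y, D x -> D y -> exists z, [/\ D z, pole Gp x z & pole Gp y z])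
    & (forall x y, D x -> Gp y -> pole Gp y x -> D y)].

Definition isum (G : zmodType) (Gp : G -> Prop) (X Y : G -> Prop) : G -> Prop :=
  fun z => Gp z /\ exists x y, [/\ X x, Y y & pole Gp z (x + y)].

(** [t X], the t-fold sum (t >= 1; the value at t = 0 is irrelevant). *)
Fixpoint imul (G : zmodType) (Gp : G -> Prop) (t : nat) (X : G -> Prop)
  : G -> Prop :=
  match t with
  | 0 => fun z => z = 0
  | t'.+1 => match t' with
             | 0 => X
             | _ => isum Gp (imul Gp t' X) X
             end
  end.

Fixpoint Gcone (P0 : nat -> int -> Prop) (n : nat -> nat) (r s : nat)
  (i : nat) : nat -> int -> Prop :=
  match i with
  | 0 => P0
  | i'.+1 =>
      let prev := Gcone P0 n r s i' in
      fix row (j : nat) : int -> Prop :=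
        match j with
        | 0 => msum r%:Z (prev 0%N) ((s%:Z) ^+ i'.+1)
                    (gen2 r%:Z (s%:Z - r%:Z))
        | j'.+1 => msum r%:Z (prev j'.+1) (n j')%:Z (row j')
        end
  end.

Arguments imul {G} Gp t X _.

(* Main.v *)
Require Import Defs.
From mathcomp Require Import all_boot all_order all_algebra.
From mathcomp Require Import ring lra zify.
From Stdlib Require Import ClassicalEpsilon.
Import Order.TTheory GRing.Theory Num.Theory.
Local Open Scope ring_scope.
Set Implicit Arguments. Unset Strict Implicit.

Lemma gauss_ex (a b X Y : int) : coprimez a b -> a * X = b * Y ->
  exists Z, Y = a * Z /\ X = b * Z.
Proof.
move=> /eqP g1 H; have [u [v Huv]] := Bezoutz a b; rewrite g1 in Huv.
exists (u * Y + v * X); split; apply/eqP; rewrite -subr_eq0.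
  have -> : Y - a * (u * Y + v * X) = Y * (1 - (u * a + v * b)) + v * (b * Y - a * X) by ring.
  by rewrite Huv H !subrr; apply/eqP; ring.
have -> : X - b * (u * Y + v * X) = X * (1 - (u * a + v * b)) + u * (a * X - b * Y) by ring.
by rewrite Huv H !subrr; apply/eqP; ring.
Qed.

Lemma cover_lem (c g N1 x : int) : 0 < c -> 0 < g -> coprimez c g ->
  c * N1 + g * c <= x -> exists y k, N1 <= y /\ 0 <= k < c /\ x = c * y + g * k.
Proof.
move=> c0 g0 /eqP g1 Hx; have [u [v Huv]] := Bezoutz c g; rewrite g1 in Huv.
have cn0 : c != 0 by rewrite gt_eqF.
set k := ((x * v) %% c)%Z.
have Ek := divz_eq (x * v) c.
have k0 : 0 <= k by apply: modz_ge0.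
have kc : k < c by have := ltz_mod (x * v) cn0; rewrite gtr0_norm.
exists (x * u + g * ((x * v) %/ c)%Z), k.
have Ex : x = c * (x * u + g * ((x * v) %/ c)%Z) + g * k.
  apply/eqP; rewrite -subr_eq0.
  have -> : x - (c * (x * u + g * ((x * v) %/ c)%Z) + g * k) =
     x * (1 - (u * c + v * g)) + g * (x * v - (((x * v) %/ c)%Z * c + k)) by ring.
  by rewrite Huv -Ek !subrr; apply/eqP; ring.
split; last by split => //; apply/andP.
move: Ex; set y := (x * u + _) => Ex.
have gk : g * k < g * c by rewrite ltr_pM2l.
have : c * N1 + g * c < c * y + g * c.
  by apply: (le_lt_trans Hx); rewrite {1}Ex ltrD2l.
rewrite ltrD2r.
by rewrite ltr_pM2l // => /ltW.
Qed.

Definition prodm (m : nat -> int) (i k : nat) : int := \prod_(i <= l < k) m l.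

Lemma prodmS m i k : (i <= k)%N -> prodm m i k.+1 = prodm m i k * m k.
Proof. by move=> h; rewrite /prodm big_nat_recr. Qed.

Lemma prodm0 m i : prodm m i i = 1.
Proof. by rewrite /prodm big_geq. Qed.

Lemma prodm_neq0 m i k : (forall l, m l != 0) -> prodm m i k != 0.
Proof. by move=> h; rewrite /prodm prodf_seq_neq0; apply/allP => l _; apply/implyP => _; exact: h. Qed.

Lemma lift_le (G : zmodType) (phi : nat -> int -> G) m :
  (forall i x, phi i.+1 (m i * x) = phi i x) ->
  forall i k x, (i <= k)%N -> phi k (prodm m i k * x) = phi i x.
Proof.
move=> H i k x ik; have [d ->] : exists d, k = (i + d)%N by exists (k - i)%N; rewrite subnKC.
elim: d => [|d IH].
  by rewrite addn0 prodm0 mul1r.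
rewrite addnS prodmS ?leq_addr //.
have -> : prodm m i (i + d) * m (i + d)%N * x = m (i + d)%N * (prodm m i (i + d) * x) by ring.
by rewrite H.
Qed.

Lemma iter_emb (P : nat -> int -> Prop) m :
  (forall i x, P i x <-> P i.+1 (m i * x)) ->
  forall i k x, (i <= k)%N -> (P i x <-> P k (prodm m i k * x)).
Proof.
move=> H i k x ik; have [d ->] : exists d, k = (i + d)%N by exists (k - i)%N; rewrite subnKC.
elim: d => [|d IH].
  by rewrite addn0 prodm0 mul1r.
rewrite addnS prodmS ?leq_addr //.
have -> : prodm m i (i + d) * m (i + d)%N * x = m (i + d)%N * (prodm m i (i + d) * x) by ring.
by rewrite -H.
Qed.

Section Additive.
Lemma phi0 (G : zmodType) (f : int -> G) : (forall x y, f (x + y) = f x + f y) -> f 0 = 0.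
Proof. by move=> h; apply: (@addrI _ (f 0)); rewrite -h !addr0. Qed.
Lemma phiN (G : zmodType) (f : int -> G) : (forall x y, f (x + y) = f x + f y) -> forall x, f (- x) = - f x.
Proof. by move=> h x; apply: (@addrI _ (f x)); rewrite -h !subrr (phi0 h). Qed.
Lemma phiB (G : zmodType) (f : int -> G) : (forall x y, f (x + y) = f x + f y) -> forall x y, f (x - y) = f x - f y.
Proof. by move=> h x y; rewrite h (phiN h). Qed.
Lemma phiMn (G : zmodType) (f : int -> G) : (forall x y, f (x + y) = f x + f y) -> forall x k, f (x *+ k) = f x *+ k.
Proof. by move=> h x; elim=> [|k IH]; rewrite ?mulr0n ?(phi0 h) // !mulrS h IH. Qed.
End Additive.

Lemma dl_inj P m (G : zmodType) (Gp : G -> Prop) phi :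
  is_dlimit P m Gp phi -> (forall l, m l != 0) ->
  forall i x y, phi i x = phi i y -> x = y.
Proof.
case=> hadd _ _ hker _ hm i x y e.
have : phi i (x - y) = 0 by rewrite (phiB (hadd i)) e subrr.
case/hker => k /eqP; rewrite mulf_eq0 (negbTE (prodm_neq0 _ _ hm)) /= subr_eq0.
by move/eqP.
Qed.

Lemma dl_level P m (G : zmodType) (Gp : G -> Prop) phi :
  is_dlimit P m Gp phi -> (forall l, m l != 0) ->
  (forall i x, P i x <-> P i.+1 (m i * x)) ->
  forall i x, Gp (phi i x) <-> P i x.
Proof.
move=> D hm hP; have [hadd hc hsur hker hpos] := D.
move=> i x; rewrite hpos; split; last by move=> h; exists i, x.
case=> j [y [Py e]].
have e2 : phi (i + j)%N (prodm m i (i + j) * x) = phi (i + j)%N (prodm m j (i + j) * y).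
  by rewrite !(lift_le hc) ?leq_addr ?leq_addl.
have := dl_inj D hm e2 => e3.
apply: (proj2 (iter_emb hP x (leq_addr j i))); rewrite e3.
by apply: (proj1 (iter_emb hP y (leq_addl i j))).
Qed.

Lemma dl_univ P m (G : zmodType) (Gp : G -> Prop) phi (G' : zmodType)
  (phi' : nat -> int -> G') :
  is_dlimit P m Gp phi -> (forall l, m l != 0) ->
  (forall i x y, phi' i (x + y) = phi' i x + phi' i y) ->
  (forall i x, phi' i.+1 (m i * x) = phi' i x) ->
  (forall i x y, phi' i x = phi' i y -> x = y) ->
  exists psi : G -> G', [/\ (forall x y, psi (x + y) = psi x + psi y),
     injective psi & (forall i x, psi (phi i x) = phi' i x)].
Proof.
move=> D hm hadd' hc' hinj'; have [hadd hc hsur hker hpos] := D.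
have wd : forall i x j y, phi i x = phi j y -> phi' i x = phi' j y.
  move=> i x j y e.
  have e2 : phi (i + j)%N (prodm m i (i + j) * x) = phi (i + j)%N (prodm m j (i + j) * y).
    by rewrite !(lift_le hc) ?leq_addr ?leq_addl.
  have e3 := dl_inj D hm e2.
  by rewrite -(lift_le hc' x (leq_addr j i)) e3 (lift_le hc' y (leq_addl i j)).
have sur : forall g, {p : nat * int | g = phi p.1 p.2}.
  move=> g; apply: constructive_indefinite_description.
  by have [i [x ->]] := hsur g; exists (i, x).
pose psi g := phi' (sval (sur g)).1 (sval (sur g)).2.
have psiE : forall i x, psi (phi i x) = phi' i x.
  move=> i x; rewrite /psi; case: (sur (phi i x)) => [[j y]] /= e.
  by apply: wd; rewrite -e.
exists psi; split => //.
  move=> g h; have [i [x ->]] := hsur g; have [j [y ->]] := hsur h.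
  by rewrite -(lift_le hc x (leq_addr j i)) -(lift_le hc y (leq_addl i j)) -hadd !psiE hadd'.
move=> g h; have [i [x ->]] := hsur g; have [j [y ->]] := hsur h.
rewrite !psiE => e.
rewrite -(lift_le hc x (leq_addr j i)) -(lift_le hc y (leq_addl i j)).
congr (phi _ _); apply: (hinj' (i + j)%N).
by rewrite !(lift_le hc') ?leq_addr ?leq_addl.
Qed.

Lemma dl_rank_one P m (G : zmodType) (Gp : G -> Prop) phi :
  is_dlimit P m Gp phi -> (forall l, m l != 0) -> rank_one G.
Proof.
move=> D hm; have [hadd hc hsur hker hpos] := D.
have pn0 : forall i, ((prodm m 0 i)%:~R : rat) != 0 by move=> i; rewrite intr_eq0 prodm_neq0.
pose phi' i (x : int) : rat := x%:~R / (prodm m 0 i)%:~R.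
have [psi [hp1 hp2 _]] : exists psi : G -> rat, [/\ (forall x y, psi (x + y) = psi x + psi y),
     injective psi & (forall i x, psi (phi i x) = phi' i x)].
  apply: (dl_univ D hm).
  - by move=> i x y; rewrite /phi' rmorphD mulrDl.
  - move=> i x; rewrite /phi' prodmS // !intrM.
    have := pn0 i; have : ((m i)%:~R : rat) != 0 by rewrite intr_eq0.
    move=> h1 h2; field; by rewrite ?h1 ?h2.
  - move=> i x y; rewrite /phi' => e.
    by apply: (@intr_inj rat); apply: (mulIf (invr_neq0 (pn0 i))).
split; last by exists psi.
exists (phi 0%N 1); apply/eqP => e.
have : phi 0%N 1 = phi 0%N 0 by rewrite e (phi0 (hadd 0%N)).
by move/(@dl_inj _ _ _ _ _ D hm 0%N).
Qed.



Lemma PoszX (a k : nat) : Posz (a ^ k)%N = (Posz a) ^+ k.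
Proof. by rewrite -!natz natrX. Qed.

Lemma mulrnz (x : int) k : x *+ k = x * k%:Z.
Proof. by rewrite -mulr_natr natz. Qed.

Definition cone (C : int -> Prop) := C 0 /\ (forall x y, C x -> C y -> C (x + y)).

Lemma cone_Mn C x k : cone C -> C x -> C (x *+ k).
Proof. by case=> h0 hD hx; elim: k => [|k IH]; rewrite ?mulr0n // mulrS; apply: hD. Qed.

Lemma cone_Mz C x (k : int) : cone C -> C x -> 0 <= k -> C (x * k).
Proof.
move=> hC hx; case: k => // k _; rewrite -natz mulr_natr; exact: cone_Mn.
Qed.

Lemma cone_zM C x (k : int) : cone C -> C x -> 0 <= k -> C (k * x).
Proof. by move=> *; rewrite mulrC; apply: cone_Mz. Qed.

Lemma gen2_cone a b : cone (gen2 a b).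
Proof.
split; first by exists 0%N, 0%N; rewrite !mulr0n addr0.
move=> x y [x1 [x2 ->]] [y1 [y2 ->]]; exists (x1 + y1)%N, (x2 + y2)%N.
by rewrite !mulrnDr; ring.
Qed.

Lemma gen2_a a b : gen2 a b a.
Proof. by exists 1%N, 0%N; rewrite mulr1n mulr0n addr0. Qed.
Lemma gen2_b a b : gen2 a b b.
Proof. by exists 0%N, 1%N; rewrite mulr1n mulr0n add0r. Qed.

Lemma gen2_ge0 a b x : 0 <= a -> 0 <= b -> gen2 a b x -> 0 <= x.
Proof. by move=> ha hb [x1 [x2 ->]]; apply: addr_ge0; apply: mulrn_wge0. Qed.

Lemma msum_cone m X k Y : cone X -> cone Y -> cone (msum m X k Y).
Proof.
move=> [X0 XD] [Y0 YD]; split; first by exists 0, 0; rewrite !mulr0 addr0.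
move=> x y [x1 [x2 [h1 [h2 ->]]]] [y1 [y2 [h3 [h4 ->]]]].
exists (x1 + y1), (x2 + y2); split; [exact: XD | split; [exact: YD | ring]].
Qed.

Lemma msumI m X k Y x y : X x -> Y y -> msum m X k Y (m * x + k * y).
Proof. by move=> hx hy; exists x, y. Qed.

Fixpoint Yd (r s : nat) (u : nat -> int) (M : nat) : int :=
  match M with
  | 0 => 0
  | M'.+1 => r%:Z * Yd r s u M' + u M * (s%:Z - r%:Z) * (s%:Z) ^+ M
  end.

Section Main.
Variables (p q r s : nat) (n : nat -> nat) (P0 : nat -> int -> Prop).
Hypotheses (hq1 : (1 < q)%N) (hqp : (q < p - q)%N)
  (hn : forall j, (0 < n j)%N)
  (hP0s : forall j, simple_component (P0 j))
  (hP00 : forall x, P0 0%N x <-> gen2 q%:Z (p%:Z - q%:Z) x)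
  (hP0emb : forall j x, P0 j x <-> P0 j.+1 ((n j)%:Z * x))
  (hqr : (q < r)%N)
  (hrn : forall l, prime l -> (l %| r)%N -> forall j, ~~ (l %| n j)%N)
  (hs : gen2 q%:Z (p%:Z - q%:Z) s%:Z) (hrs : coprime r s) (hsr : (r < s - r)%N).

Local Notation Gc := (Gcone P0 n r s).

Lemma r_gt0 : (0 < r)%N. Proof. lia. Qed.
Lemma r_le_s : (r <= s)%N. Proof. lia. Qed.
Lemma SR : s%:Z - r%:Z = (s - r)%N. Proof. by rewrite subzn // r_le_s. Qed.
Lemma SR_gt0 : 0 < s%:Z - r%:Z. Proof. rewrite SR; lia. Qed.
Lemma R_gt0 : 0 < r%:Z. Proof. have := r_gt0; lia. Qed.

Lemma cop_rn j : coprime r (n j).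
Proof.
apply/negPn/negP => h.
have g1 : (1 < gcdn r (n j))%N.
  have : (0 < gcdn r (n j))%N by rewrite gcdn_gt0 r_gt0.
  by move: h; rewrite /coprime; lia.
have pp := pdiv_prime g1.
have d := pdiv_dvd (gcdn r (n j)).
have := hrn pp (dvdn_trans d (dvdn_gcdl _ _)) j.
by rewrite (dvdn_trans d (dvdn_gcdr _ _)).
Qed.

Lemma cop_rsr : coprime r (s - r).
Proof. by rewrite /coprime -gcdnDl subnKC ?r_le_s. Qed.

Lemma copz_rn j : coprimez r%:Z (n j)%:Z.
Proof. by rewrite coprimezE; apply: cop_rn. Qed.

Lemma copz_rS k : coprimez r%:Z ((s%:Z) ^+ k).
Proof. by rewrite -PoszX coprimezE /=; apply: coprimeXr. Qed.

Lemma copz_rSSR k : coprimez r%:Z ((s%:Z) ^+ k * (s%:Z - r%:Z)).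
Proof.
rewrite SR -PoszX -PoszM coprimezE /= coprimeMr coprimeXr //.
exact: cop_rsr.
Qed.

Lemma B_cone : cone (gen2 r%:Z (s%:Z - r%:Z)).
Proof. exact: gen2_cone. Qed.

Lemma B_ge0 x : gen2 r%:Z (s%:Z - r%:Z) x -> 0 <= x.
Proof. apply: gen2_ge0; [exact: ltW R_gt0 | exact: ltW SR_gt0]. Qed.

Lemma B_s : gen2 r%:Z (s%:Z - r%:Z) s%:Z.
Proof. by exists 1%N, 1%N; rewrite !mulr1n addrC subrK. Qed.

Lemma P0_cone j : cone (P0 j).
Proof. by have [[h0 hD _] _] := hP0s j; split. Qed.

Lemma Gc_cone i j : cone (Gc i j).
Proof.
elim: i j => [|i IH] j; first exact: P0_cone.
elim: j => [|j IHj]; [exact: msum_cone (IH 0%N) B_cone | exact: msum_cone (IH _) IHj].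
Qed.

Lemma P0_pos j : exists u, 0 < u /\ P0 j u.
Proof.
elim: j => [|j [u [u0 hu]]].
  exists q%:Z; split; first lia.
  by apply/hP00; apply: gen2_a.
exists ((n j)%:Z * u); split; last exact: (proj1 (hP0emb j u) hu).
by apply: mulr_gt0 => //; have := hn j; lia.
Qed.

Lemma P0_ge0 j x : P0 j x -> 0 <= x.
Proof.
move=> hx; have [u [u0 hu]] := P0_pos j.
have [[_ _ hA] _] := hP0s j.
rewrite leNgt; apply/negP => x0.
have h1 : P0 j (x * u) by apply: cone_Mz (P0_cone j) hx (ltW u0).
have h2 : P0 j (- (x * u)).
  have -> : -(x * u) = u * (- x) by ring.
  apply: cone_Mz (P0_cone j) hu _; lia.
have := hA _ h1 h2 => /eqP; rewrite mulf_eq0; lia.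
Qed.

Lemma Gc_ge0 i j x : Gc i j x -> 0 <= x.
Proof.
elim: i j x => [|i IH] j; first exact: P0_ge0.
elim: j => [|j IHj] x.
  case=> [y [z [hy [hz ->]]]]; apply: addr_ge0.
    by apply: mulr_ge0; [exact: ltW R_gt0 | exact: IH hy].
  by apply: mulr_ge0; [apply: exprn_ge0; lia | exact: B_ge0 hz].
case=> [y [z [hy [hz ->]]]]; apply: addr_ge0.
  by apply: mulr_ge0; [exact: ltW R_gt0 | exact: IH hy].
by apply: mulr_ge0; [lia | exact: IHj hz].
Qed.


Lemma Gc_SS i j x : Gc i.+1 j.+1 x <-> msum r%:Z (Gc i j.+1) (n j)%:Z (Gc i.+1 j) x.
Proof. by []. Qed.
Lemma Gc_S0 i x : Gc i.+1 0 x <-> msum r%:Z (Gc i 0) ((s%:Z) ^+ i.+1) (gen2 r%:Z (s%:Z - r%:Z)) x.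
Proof. by []. Qed.

Lemma Gc0 i j : Gc i j 0. Proof. exact: (Gc_cone i j).1. Qed.
Lemma GcD i j x y : Gc i j x -> Gc i j y -> Gc i j (x + y).
Proof. exact: (Gc_cone i j).2. Qed.

Lemma Gc_r i j x : Gc i j x -> Gc i.+1 j (r%:Z * x).
Proof.
case: j => [|j] hx.
  have -> : r%:Z * x = r%:Z * x + (s%:Z) ^+ i.+1 * 0 by rewrite mulr0 addr0.
  by apply: msumI => //; exact: B_cone.1.
have -> : r%:Z * x = r%:Z * x + (n j)%:Z * 0 by rewrite mulr0 addr0.
by apply/Gc_SS; apply: msumI => //; exact: Gc0.
Qed.

Lemma Gc_n i j x : Gc i j x -> Gc i j.+1 ((n j)%:Z * x).
Proof.
case: i => [|i] hx; first exact: (proj1 (hP0emb j x) hx).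
have -> : (n j)%:Z * x = r%:Z * 0 + (n j)%:Z * x by rewrite mulr0 add0r.
by apply/Gc_SS; apply: msumI => //; exact: Gc0.
Qed.

Lemma Gc_s i : Gc i 0 ((s%:Z) ^+ i.+1).
Proof.
elim: i => [|i IH]; first by rewrite expr1; apply/hP00.
have -> : (s%:Z) ^+ i.+2 = r%:Z * 0 + (s%:Z) ^+ i.+1 * s%:Z by rewrite mulr0 add0r exprS mulrC.
by apply: msumI; [exact: Gc0 | exact: B_s].
Qed.

Lemma emb_r j : forall i x, Gc i j x <-> Gc i.+1 j (r%:Z * x).
Proof.
elim: j => [|j IH] i x; split; try exact: Gc_r.
  case=> [y [b [hy [hb e]]]].
  have e2 : r%:Z * (x - y) = (s%:Z) ^+ i.+1 * b by rewrite mulrBr e; ring.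
  have [Z [bZ xZ]] := gauss_ex (copz_rS i.+1) e2.
  have Z0 : 0 <= Z.
    have := B_ge0 hb; rewrite bZ pmulr_rge0 //; exact: R_gt0.
  have -> : x = y + (s%:Z) ^+ i.+1 * Z by rewrite -xZ; ring.
  by apply: GcD => //; apply: cone_Mz (Gc_cone _ _) (Gc_s i) Z0.
case=> [y [z [hy [hz e]]]].
have e2 : r%:Z * (x - y) = (n j)%:Z * z by rewrite mulrBr e; ring.
have [Z [zZ xZ]] := gauss_ex (copz_rn j) e2.
have hZ : Gc i j Z by apply/IH; rewrite -zZ.
have -> : x = y + (n j)%:Z * Z by rewrite -xZ; ring.
by apply: GcD => //; apply: Gc_n.
Qed.

Lemma emb_n i : forall j x, Gc i j x <-> Gc i j.+1 ((n j)%:Z * x).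
Proof.
elim: i => [|i IH] j x; first exact: hP0emb.
split; first exact: Gc_n.
case=> [y [z [hy [hz e]]]].
have e2 : (n j)%:Z * (x - z) = r%:Z * y by rewrite mulrBr e; ring.
have cnr : coprimez (n j)%:Z r%:Z by rewrite /coprimez gcdzC; exact: copz_rn.
have [Z [yZ xZ]] := gauss_ex cnr e2.
have hZ : Gc i j Z by apply/IH; rewrite -yZ.
have -> : x = r%:Z * Z + z by rewrite -xZ; ring.
by apply: GcD => //; apply: Gc_r.
Qed.


Lemma P0_cof j : exists N, forall x, N <= x -> P0 j x.
Proof.
have [u [u0 hu]] := P0_pos j.
have [k [hk _]] := (hP0s j).2 u hu (lt0r_neq0 u0) 1.
have hC := P0_cone j.
set a := u *+ k in hk.
have ha : P0 j a by apply: cone_Mn.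
have a0 : 0 <= a by apply: mulrn_wge0; exact: ltW.
have [az|ap] := eqVneq a 0.
  exists 0 => x x0; rewrite az addr0 in hk.
  by have := cone_Mz hC hk x0; rewrite mul1r.
have apos : 0 < a by rewrite lt_def ap a0.
exists (a * a) => x hx.
have Ex := divz_eq x a.
set Q := (x %/ a)%Z in Ex; set rho := (x %% a)%Z in Ex.
have rho0 : 0 <= rho by apply: modz_ge0.
have rhoa : rho < a by have := ltz_mod x ap; rewrite gtr0_norm.
have Qa : a <= Q.
  rewrite leNgt; apply/negP => Qlt.
  have : Q * a <= (a - 1) * a by rewrite ler_pM2r //; lia.
  nia.
have -> : x = a * (Q - rho) + (1 + a) * rho by rewrite Ex; ring.
apply: hC.2; first by apply: cone_Mz hC ha _; lia.
by apply: cone_Mz hC hk rho0.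
Qed.

Lemma Gc_cof i j : exists N, forall x, N <= x -> Gc i j x.
Proof.
elim: i j => [|i IH] j; first exact: P0_cof.
elim: j => [|j [N2 IHj]].
  have [N1 h1] := IH 0%N.
  set g := (s%:Z) ^+ i.+1 * (s%:Z - r%:Z).
  have g0 : 0 < g by apply: mulr_gt0; [apply: exprn_gt0; lia | exact: SR_gt0].
  exists (r%:Z * N1 + g * r%:Z) => x hx.
  have [y [k [yN [k0 e]]]] := cover_lem R_gt0 g0 (copz_rSSR i.+1) hx.
  rewrite e /g -mulrA; apply/Gc_S0; apply: msumI; first exact: h1.
  by case/andP: k0 => k0 _; exact: (cone_Mz B_cone (gen2_b r%:Z (s%:Z - r%:Z)) k0).
have [N1 h1] := IH j.+1.
have nj0 : 0 < (n j)%:Z by have := hn j; lia.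
exists (r%:Z * N1 + (n j)%:Z * r%:Z + (n j)%:Z * N2) => x hx.
have hx' : r%:Z * N1 + (n j)%:Z * r%:Z <= x - (n j)%:Z * N2 by lra.
have [y [k [yN [k0 e]]]] := cover_lem R_gt0 nj0 (copz_rn j) hx'.
have -> : x = r%:Z * y + (n j)%:Z * (N2 + k) by rewrite -[x](subrK ((n j)%:Z * N2)) e; ring.
apply/Gc_SS; apply: msumI; first exact: h1.
by apply: IHj; case/andP: k0 => k0 _; lra.
Qed.

Lemma cone_simple C : cone C -> (forall x, C x -> 0 <= x) ->
  (exists N, forall x, N <= x -> C x) -> simple_component C.
Proof.
move=> [C0 CD] Cge [N CN]; split; first split => // x h1 h2.
  by have := Cge _ h1; have := Cge _ h2; lia.
move=> u hu u0 x.
have u1 : 1 <= u by have := Cge _ hu; move: u0; lia.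
exists (`|x| + `|N|)%N.
have K0 : 0 <= ((`|x| + `|N|)%N)%:Z by [].
have hK : ((`|x| + `|N|)%N)%:Z <= u * ((`|x| + `|N|)%N)%:Z.
  by rewrite ler_peMl.
rewrite -mulr_natr natz; split; apply: CN; move: hK; rewrite PoszD !abszE; lia.
Qed.

Lemma Gc_simple i j : simple_component (Gc i j).
Proof. apply: cone_simple; [exact: Gc_cone | exact: Gc_ge0 | exact: Gc_cof]. Qed.


Lemma decomp M z : Gc M.+1 0 z -> exists y v, [/\ Gc M 0 y, 0 <= v &
  z = r%:Z * y + (s%:Z) ^+ M.+1 * (s%:Z - r%:Z) * v].
Proof.
case=> x [b [hx [[a1 [a2 ->]] ->]]].
exists (x + (s%:Z) ^+ M.+1 * a1%:Z), a2%:Z; split => //.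
  by apply: GcD => //; apply: cone_Mz (Gc_cone _ _) (Gc_s M) _.
by rewrite !mulrnz; ring.
Qed.


Lemma claimK M : forall (u : nat -> int) e k, (forall m, u m < r%:Z) -> 0 < e -> 0 <= k ->
  ~ Gc M 0 (Yd r s u M - (r%:Z) ^+ M * e - (s%:Z - r%:Z) * (s%:Z) ^+ M.+1 * k).
Proof.
have S0 : 0 <= s%:Z by [].
have SR0 := SR_gt0.
elim: M => [|M IH] u e k hu e0 k0 hz.
  have := Gc_ge0 hz; rewrite /= expr0 expr1 mul1r sub0r.
  have : 0 <= (s%:Z - r%:Z) * s%:Z * k by apply: mulr_ge0 => //; apply: mulr_ge0 => //; exact: ltW.
  lra.
have [y [v [hy v0 e1]]] := decomp hz.
set X := Yd r s u M - (r%:Z) ^+ M * e - y.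
set W := v - u M.+1 + s%:Z * k.
have e2 : r%:Z * X = ((s%:Z) ^+ M.+1 * (s%:Z - r%:Z)) * W.
  apply/eqP; rewrite -subr_eq0; apply/eqP.
  have -> : r%:Z * X - (s%:Z) ^+ M.+1 * (s%:Z - r%:Z) * W =
    (Yd r s u M.+1 - (r%:Z) ^+ M.+1 * e - (s%:Z - r%:Z) * (s%:Z) ^+ M.+2 * k) -
    (r%:Z * y + (s%:Z) ^+ M.+1 * (s%:Z - r%:Z) * v).
    by rewrite /X /W /= !exprS; ring.
  by rewrite e1 subrr.
have [Z [WZ XZ]] := gauss_ex (copz_rSSR M.+1) e2.
have Z0 : 0 <= Z.
  have h1 : - r%:Z < r%:Z * Z.
    rewrite -WZ /W; have := hu M.+1.
    have : 0 <= s%:Z * k by apply: mulr_ge0.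
    lra.
  have : -1 < Z by rewrite -(ltr_pM2l R_gt0) mulrN1.
  lia.
apply: (IH u e Z hu e0 Z0).
suff -> : Yd r s u M - (r%:Z) ^+ M * e - (s%:Z - r%:Z) * (s%:Z) ^+ M.+1 * Z = y by [].
apply/eqP; rewrite -subr_eq0.
have -> : Yd r s u M - (r%:Z) ^+ M * e - (s%:Z - r%:Z) * (s%:Z) ^+ M.+1 * Z - y =
   X - (s%:Z) ^+ M.+1 * (s%:Z - r%:Z) * Z by rewrite /X; ring.
by rewrite XZ subrr.
Qed.
Lemma Y_in M : Gc M 0 (Yd r s (fun _ => 1) M).
Proof.
elim: M => [|M IH]; first exact: Gc0.
have -> : Yd r s (fun _ => 1) M.+1 = r%:Z * Yd r s (fun _ => 1) M + (s%:Z) ^+ M.+1 * (s%:Z - r%:Z).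
  by rewrite /=; ring.
by apply/Gc_S0; apply: msumI => //; exact: gen2_b.
Qed.

Lemma Yd_const t M : Yd r s (fun _ => t) M = t * Yd r s (fun _ => 1) M.
Proof. by elim: M => [|M IH] /=; [rewrite mulr0 | rewrite IH; ring]. Qed.

Lemma Y_closed M : Yd r s (fun _ => 1) M = (s%:Z) ^+ M.+1 - s%:Z * (r%:Z) ^+ M.
Proof. by elim: M => [|M IH] /=; [rewrite expr1 expr0; ring | rewrite IH !exprS; ring]. Qed.

Lemma rY M : Gc M 0 (r%:Z * Yd r s (fun _ => 1) M - (r%:Z) ^+ M * (M%:Z * (s%:Z * (s%:Z - r%:Z)))).
Proof.
elim: M => [|M IH].
  have -> : r%:Z * Yd r s (fun _ => 1) 0 - (r%:Z) ^+ 0 * (0%N%:Z * (s%:Z * (s%:Z - r%:Z))) = 0.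
    by rewrite /= mulr0 mul0r mulr0 subr0.
  exact: Gc0.
have -> : r%:Z * Yd r s (fun _ => 1) M.+1 - (r%:Z) ^+ M.+1 * (M.+1%:Z * (s%:Z * (s%:Z - r%:Z))) =
  r%:Z * (r%:Z * Yd r s (fun _ => 1) M - (r%:Z) ^+ M * (M%:Z * (s%:Z * (s%:Z - r%:Z))))
  + r%:Z * ((s%:Z - r%:Z) * Yd r s (fun _ => 1) M).
  by rewrite !Y_closed -[Posz M.+1]/(Posz (1 + M)%N) PoszD !exprS; ring.
apply: GcD; apply: Gc_r => //.
apply: cone_zM (Gc_cone _ _) (Y_in M) _; exact: ltW SR_gt0.
Qed.

Lemma mG_neq0 i : ((r * n i)%N)%:Z != 0.
Proof. have := r_gt0; have := hn i; rewrite PoszM; lia. Qed.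

Lemma Gemb i x : Gc i i x <-> Gc i.+1 i.+1 (((r * n i)%N)%:Z * x).
Proof.
rewrite PoszM -mulrA; split.
  by move=> h; exact: (proj1 (emb_r i.+1 i _) (proj1 (emb_n i i x) h)).
by move=> h; exact: (proj2 (emb_n i i x) (proj2 (emb_r i.+1 i _) h)).
Qed.

Lemma Glevel (G : zmodType) (Gp : G -> Prop) phiG :
  is_dlimit (fun i => Gc i i) (fun i => (r * n i)%:Z) Gp phiG ->
  forall i x, Gp (phiG i x) <-> Gc i i x.
Proof. move=> D; apply: (dl_level D mG_neq0); exact: Gemb. Qed.

Lemma common P m (G : zmodType) (Gp : G -> Prop) phi :
  is_dlimit P m Gp phi -> forall g h, exists k a b, g = phi k a /\ h = phi k b.
Proof.
case=> _ hc hsur _ _ g h; have [i [x ->]] := hsur g; have [j [y ->]] := hsur h.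
exists (i + j)%N, (prodm m i (i + j) * x), (prodm m j (i + j) * y).
by rewrite !(lift_le hc) ?leq_addr ?leq_addl.
Qed.

Lemma G_simple (G : zmodType) (Gp : G -> Prop) phiG :
  is_dlimit (fun i => Gc i i) (fun i => (r * n i)%:Z) Gp phiG -> simple_pog Gp.
Proof.
move=> D; have [hadd hc hsur hker hpos] := D.
have L := Glevel D.
split; first split.
- by rewrite -(phi0 (hadd 0%N)); apply/L; exact: Gc0.
- move=> x y hx hy; have [k [a [b [ea eb]]]] := common D x y.
  have ha : Gc k k a by apply/(L k a); rewrite -ea.
  have hb : Gc k k b by apply/(L k b); rewrite -eb.
  by rewrite ea eb -hadd; apply/L; apply: GcD.
- move=> x hx hnx; have [k [a [b [ea eb]]]] := common D x (- x).
  have e : b = - a by apply: (@dl_inj _ _ _ _ _ D mG_neq0 k); rewrite -eb ea (phiN (hadd k)).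
  have ha : Gc k k a by apply/(L k a); rewrite -ea.
  have hna : Gc k k (- a) by apply/(L k (- a)); rewrite -e -eb.
  have [[_ _ hA] _] := Gc_simple k k.
  by rewrite ea (hA _ ha hna) (phi0 (hadd k)).
move=> u hu u0 x; have [k [a [b [ea eb]]]] := common D u x.
have ha : Gc k k a by apply/(L k a); rewrite -ea.
have a0 : a != 0 by apply: contra u0 => /eqP a0; rewrite ea a0 (phi0 (hadd k)).
have [N [h1 h2]] := (Gc_simple k k).2 a ha a0 b.
exists N; rewrite ea eb -(phiMn (hadd k)) -(phiB (hadd k)) -hadd; split; exact/L.
Qed.

Lemma H_emb (H : zmodType) (Hp : H -> Prop) phiH
  (DH : is_dlimit P0 (fun j => (n j)%:Z) Hp phiH)
  (G : zmodType) (Gp : G -> Prop) phiG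
  (DG : is_dlimit (fun i => Gc i i) (fun i => (r * n i)%:Z) Gp phiG) :
  exists psi : H -> G, order_embedding Hp Gp psi.
Proof.
have hnz : forall l, (n l)%:Z != 0 by move=> l; have := hn l; lia.
have [hadd hc hsur _ _] := DG.
have [_ _ hsurH _ _] := DH.
pose Rz := fun _ : nat => r%:Z.
have Rnz : forall l, Rz l != 0 by move=> l; rewrite /Rz; have := r_gt0; lia.
pose phi' j x := phiG j (prodm Rz 0 j * x).
have A1 : forall i x y, phi' i (x + y) = phi' i x + phi' i y by move=> i x y; rewrite /phi' mulrDr hadd.
have A2 : forall i x, phi' i.+1 ((n i)%:Z * x) = phi' i x.
  move=> i x; rewrite /phi' prodmS // -[RHS](hc i); congr (phiG _ _); rewrite PoszM /Rz; ring.
have A3 : forall i x y, phi' i x = phi' i y -> x = y.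
  move=> i x y /(@dl_inj _ _ _ _ _ DG mG_neq0 i).
  exact: (mulfI (prodm_neq0 0 i Rnz)).
have [psi [p1 p2 p3]] := dl_univ DH hnz A1 A2 A3.
exists psi; split => // h; have [j [x ->]] := hsurH h.
rewrite p3 (dl_level DH hnz hP0emb) (Glevel DG).
exact: (iter_emb (P := fun i => Gc i j) (m := Rz) (emb_r j) x (leq0n j)).
Qed.

Lemma K_emb (K : zmodType) (Kp : K -> Prop) phiK
  (DK : is_dlimit (fun i => Gc i 0%N) (fun _ => r%:Z) Kp phiK)
  (G : zmodType) (Gp : G -> Prop) phiG
  (DG : is_dlimit (fun i => Gc i i) (fun i => (r * n i)%:Z) Gp phiG) :
  exists psi : K -> G, order_embedding Kp Gp psi.
Proof.
pose nZ := fun l => (n l)%:Z.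
have hnz : forall l, nZ l != 0 by move=> l; rewrite /nZ; have := hn l; lia.
have [hadd hc hsur _ _] := DG.
have [_ _ hsurK _ _] := DK.
have Rnz : forall l : nat, r%:Z != 0 by move=> l; have := r_gt0; lia.
pose phi' j x := phiG j (prodm nZ 0 j * x).
have A1 : forall i x y, phi' i (x + y) = phi' i x + phi' i y by move=> i x y; rewrite /phi' mulrDr hadd.
have A2 : forall i x, phi' i.+1 (r%:Z * x) = phi' i x.
  move=> i x; rewrite /phi' prodmS // -[RHS](hc i); congr (phiG _ _); rewrite PoszM /nZ; ring.
have A3 : forall i x y, phi' i x = phi' i y -> x = y.
  move=> i x y /(@dl_inj _ _ _ _ _ DG mG_neq0 i).
  exact: (mulfI (prodm_neq0 0 i hnz)).
have [psi [p1 p2 p3]] := dl_univ DK Rnz A1 A2 A3.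
exists psi; split => // h; have [j [x ->]] := hsurK h.
rewrite p3 (dl_level DK Rnz (fun i x => emb_r 0 i x)) (Glevel DG).
exact: (iter_emb (P := Gc j) (m := nZ) (emb_n j) x (leq0n j)).
Qed.

Lemma prod_mG M : prodm (fun i => (r * n i)%:Z) 0 M = (r%:Z) ^+ M * prodm (fun l => (n l)%:Z) 0 M.
Proof.
elim: M => [|M IH]; first by rewrite !prodm0 expr0 mul1r.
by rewrite !prodmS // IH exprS PoszM; ring.
Qed.

Lemma part_iv (G : zmodType) (Gp : G -> Prop) phiG
  (DG : is_dlimit (fun i => Gc i i) (fun i => (r * n i)%:Z) Gp phiG) :
  exists D : G -> Prop,
           [/\ g_interval Gp D,
               (forall t : nat, (0 < t)%N -> (t <= r - 1)%N ->
                  ~ (forall g, imul Gp t D g <-> Gp g))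
             & (forall g, imul Gp r D g <-> Gp g)].
Proof.
have [hadd hc hsur hker hpos] := DG.
have L := Glevel DG.
have [[Gp0 GpD _] hunit] := G_simple DG.
have GpMn : forall x k, Gp x -> Gp (x *+ k).
  by move=> x k hx; elim: k => [|k IH]; rewrite ?mulr0n // mulrS; apply: GpD.
have Gtr : forall a b c, Gp (b - a) -> Gp (c - b) -> Gp (c - a).
  by move=> a b c h1 h2; have := GpD _ _ h2 h1; rewrite addrA subrK.
pose nZ := fun l => (n l)%:Z.
pose NN M := prodm nZ 0 M.
pose Y M := Yd r s (fun _ => 1) M.
pose dd M := phiG M (NN M * Y M).
have lvl0 : forall M z, Gc M 0 z <-> Gc M M (NN M * z).
  by move=> M z; exact: (iter_emb (P := Gc M) (m := nZ) (emb_n M) z (leq0n M)).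
have dpos : forall M, Gp (dd M) by move=> M; apply/L; apply/lvl0; exact: Y_in.
have dstep : forall M, Gp (dd M.+1 - dd M).
  move=> M; rewrite {2}/dd -(hc M) -(phiB (hadd _)).
  have -> : NN M.+1 * Y M.+1 - ((r * n M)%N)%:Z * (NN M * Y M) =
            NN M.+1 * (r%:Z * 0 + (s%:Z) ^+ M.+1 * (s%:Z - r%:Z)).
    by rewrite /NN /Y /= prodmS // PoszM /nZ; ring.
  apply/L; apply/lvl0; apply/Gc_S0; apply: msumI; [exact: Gc0 | exact: gen2_b].
have dmono : forall M M', (M <= M')%N -> Gp (dd M' - dd M).
  move=> M M' h; rewrite -(subnKC h); elim: (M' - M)%N => [|k IH].
    by rewrite addn0 subrr.
  by rewrite addnS; apply: Gtr IH (dstep _).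
have dmonot : forall M M' t, (M <= M')%N -> Gp (dd M' *+ t - dd M *+ t).
  by move=> M M' t h; rewrite -mulrnBl; apply: GpMn; apply: dmono.
pose D := fun g => Gp g /\ exists M, Gp (dd M - g).
have Dchar : forall t, (0 < t)%N -> forall g,
    imul Gp t D g <-> Gp g /\ exists M, Gp (dd M *+ t - g).
  case=> // t _; elim: t => [|t IH] g.
    by rewrite /= /D; split; case=> h1 [M h2]; split => //; exists M; rewrite ?mulr1n in h2 *.
  change (isum Gp (imul Gp t.+1 D) D g <-> Gp g /\ (exists M, Gp (dd M *+ t.+2 - g))).
  split.
    case=> hg [x [y [/IH [hx [M1 h1]] [hy [M2 h2]] h3]]]; split => //.
    exists (M1 + M2)%N.
    apply: (Gtr _ (x + y)) => //.
    have hA : Gp (dd (M1 + M2)%N *+ t.+1 - x) by apply: Gtr h1 _; apply: dmonot; apply: leq_addr.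
    have hB : Gp (dd (M1 + M2)%N - y) by apply: Gtr h2 _; apply: dmono; apply: leq_addl.
    have := GpD _ _ hA hB.
    by rewrite addrACA -opprD -mulrSr.
  case=> hg [M hM]; split => //.
  exists (dd M *+ t.+1), (dd M); split.
  - by apply/IH; split; [exact: GpMn | exists M; rewrite subrr].
  - by split => //; exists M; rewrite subrr.
  - by rewrite /pole -mulrSr.
exists D; split.
- split.
  + by move=> x [].
  + by exists (dd 0%N); split => //; exists 0%N; rewrite subrr.
  + move=> x y [hx [M1 h1]] [hy [M2 h2]]; exists (dd (M1 + M2)%N); split.
    * by split => //; exists (M1 + M2)%N; rewrite subrr.
    * by apply: Gtr h1 _; apply: dmono; apply: leq_addr.
    * by apply: Gtr h2 _; apply: dmono; apply: leq_addl.
  + by move=> x y [hx [M h]] hy hyx; split => //; exists M; apply: Gtr hyx h.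
- move=> t t0 tr hall.
  have hq : Gp (phiG 0%N q%:Z) by apply/L; apply/hP00; exact: gen2_a.
  have := (proj2 (hall _)) hq => /(Dchar t t0) [_ [M hM]].
  move: hM; rewrite -(lift_le hc q%:Z (leq0n M)) prod_mG.
  rewrite /dd -(phiMn (hadd M)) -(phiB (hadd M)) => /L.
  have -> : (NN M * Y M) *+ t - (r%:Z) ^+ M * prodm nZ 0 M * q%:Z =
     NN M * (Yd r s (fun _ => t%:Z) M - (r%:Z) ^+ M * q%:Z - (s%:Z - r%:Z) * (s%:Z) ^+ M.+1 * 0).
    by rewrite Yd_const mulrnz /NN /Y; ring.
  move/lvl0; apply: claimK => //.
    by move=> _; have := r_gt0; move: tr; lia.
  by move: hq1; lia.
move=> g; split; first by move/(Dchar r r_gt0) => [].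
move=> hg; apply/(Dchar r r_gt0); split => //.
set u0 := phiG 0%N (s%:Z * (s%:Z - r%:Z)).
have hu0 : Gp u0.
  by apply/L; apply/hP00; apply: cone_Mz (gen2_cone _ _) hs _; exact: ltW SR_gt0.
have u0nz : u0 != 0.
  apply/eqP => e.
  have : phiG 0%N (s%:Z * (s%:Z - r%:Z)) = phiG 0%N 0 by rewrite -/u0 e (phi0 (hadd 0%N)).
  move/(@dl_inj _ _ _ _ _ DG mG_neq0 0%N) => h0.
  have : 0 < s%:Z * (s%:Z - r%:Z).
    by apply: mulr_gt0; [have := SR_gt0; have := R_gt0; lia | exact: SR_gt0].
  by rewrite h0 ltxx.
have [c [_ hc2]] := hunit u0 hu0 u0nz g.
exists c.
apply: (Gtr _ (u0 *+ c)) => //.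
rewrite /dd /u0 -(lift_le hc _ (leq0n c)) prod_mG -!(phiMn (hadd c)) -(phiB (hadd c)).
apply/L.
have -> : (NN c * Y c) *+ r - ((r%:Z) ^+ c * prodm nZ 0 c * (s%:Z * (s%:Z - r%:Z))) *+ c =
    NN c * (r%:Z * Y c - (r%:Z) ^+ c * (c%:Z * (s%:Z * (s%:Z - r%:Z)))).
  by rewrite !mulrnz /NN; ring.
apply/lvl0; exact: rY.
Qed.

Lemma main_conj :
  let Gc := Gcone P0 n r s in
  (forall i j, simple_component (Gc i j)) /\
  (forall i j x, Gc i j x <-> Gc i j.+1 ((n j)%:Z * x)) /\
  (forall i j x, Gc i j x <-> Gc i.+1 j (r%:Z * x)) /\
  (forall (H : zmodType) (Hp : H -> Prop) (phiH : nat -> int -> H),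
     is_dlimit P0 (fun j => (n j)%:Z) Hp phiH ->
   forall (K : zmodType) (Kp : K -> Prop) (phiK : nat -> int -> K),
     is_dlimit (fun i => Gc i 0%N) (fun _ => r%:Z) Kp phiK ->
   forall (G : zmodType) (Gp : G -> Prop) (phiG : nat -> int -> G),
     is_dlimit (fun i => Gc i i) (fun i => (r * n i)%:Z) Gp phiG ->
     [/\ simple_pog Gp, rank_one G,
         (exists psi : H -> G, order_embedding Hp Gp psi),
         (exists psi : K -> G, order_embedding Kp Gp psi)
       & (exists D : G -> Prop,
           [/\ g_interval Gp D,
               (forall t : nat, (0 < t)%N -> (t <= r - 1)%N ->
                  ~ (forall g, imul Gp t D g <-> Gp g))
             & (forall g, imul Gp r D g <-> Gp g)])]).
Proof.
intros Gc'; subst Gc'; split; first exact: Gc_simple.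
split; first by move=> i j x; exact: emb_n.
split; first by move=> i j x; exact: emb_r.
move=> H Hp phiH DH K Kp phiK DK G Gp phiG DG; split.
- exact: G_simple DG.
- exact: dl_rank_one DG mG_neq0.
- by case: (H_emb DH DG) => psi h; exists psi.
- by case: (K_emb DK DG) => psi h; exists psi.
- exact: part_iv DG.
Qed.

End Main.

Unset Implicit Arguments. Set Strict Implicit.

Theorem proposition3p3
  (p q r s : nat) (n : nat -> nat) (P0 : nat -> int -> Prop) :
  (1 < q)%N -> (q < p - q)%N -> coprime p q ->
  (forall j, 0 < n j)%N ->
  (forall j, simple_component (P0 j)) ->
  (forall x, P0 0%N x <-> gen2 q%:Z (p%:Z - q%:Z) x) ->
  (forall j x, P0 j x <-> P0 j.+1 ((n j)%:Z * x)) ->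
  (q < r)%N ->
  (forall l, prime l -> (l %| r)%N -> forall j, ~~ (l %| n j)%N) ->
  gen2 q%:Z (p%:Z - q%:Z) s%:Z -> coprime r s -> (r < s - r)%N ->
  let Gc := Gcone P0 n r s in
  (* (i) *)
  (forall i j, simple_component (Gc i j)) /\
  (* (ii) *)
  (forall i j x, Gc i j x <-> Gc i j.+1 ((n j)%:Z * x)) /\
  (forall i j x, Gc i j x <-> Gc i.+1 j (r%:Z * x)) /\
  (* (iii) and (iv) *)
  (forall (H : zmodType) (Hp : H -> Prop) (phiH : nat -> int -> H),
     is_dlimit P0 (fun j => (n j)%:Z) Hp phiH ->
   forall (K : zmodType) (Kp : K -> Prop) (phiK : nat -> int -> K),
     is_dlimit (fun i => Gc i 0%N) (fun _ => r%:Z) Kp phiK ->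
   forall (G : zmodType) (Gp : G -> Prop) (phiG : nat -> int -> G),
     is_dlimit (fun i => Gc i i) (fun i => (r * n i)%:Z) Gp phiG ->
     [/\ simple_pog Gp, rank_one G,
         (exists psi : H -> G, order_embedding Hp Gp psi),
         (exists psi : K -> G, order_embedding Kp Gp psi)
       & (exists D : G -> Prop,
           [/\ g_interval Gp D,
               (forall t : nat, (0 < t)%N -> (t <= r - 1)%N ->
                  ~ (forall g, imul Gp t D g <-> Gp g))
             & (forall g, imul Gp r D g <-> Gp g)])]).
Proof.
move=> h1 h2 h3 h4 h5 h6 h7 h8 h9 h10 h11 h12.
exact: (main_conj h1 h2 h4 h5 h6 h7 h8 h9 h10 h11 h12).
Qed.
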